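(* Let $d\ge 1$ and $r\geq 0$. The natural maps $H^r(\Gamma(d,1,n+1);\mathbb{Q})\to H^r(\Gamma(d,1,n);\mathbb{Q})$ are surjective for all $n\ge 1$, and they are isomorphisms for $n\geq 2r$ (so $H^r(\Gamma(d,1,n);\mathbb{Q})$ stabilizes for $n\geq 2r$).
   Context: $G(d,1,n)$ is the group of $n\times n$ monomial matrices with nonzero entries $d$-th roots of unity, acting on $\mathbb{C}^n$, with hyperplane arrangement $\mathcal A$ (hyperplanes $z_i=\zeta z_j$, $i<j$, $\zeta^d=1$, and, for $d>1$, $z_i=0$). With $X=\mathbb{C}^n\setminus\bigcup\mathcal A$, $P=\pi_1(X)$, $B=\pi_1(X/G(d,1,n))$, $\Gamma(d,1,n)=B/[P,P]$, and $H^\bullet(\Gamma(d,1,n);\mathbb{Q})\cong\Lambda^\bullet(\mathbb{Q}\mathcal A)^{G(d,1,n)}$. The natural maps are induced by the inclusion $\Gamma(d,1,n)\hookrightarrow\Gamma(d,1,n+1)$ compatible with $G(d,1,n)\hookrightarrow G(d,1,n+1)$, $M\mapsto\mathrm{diag}(M,1)$; on the exterior algebras they send the $d\log$ forms of hyperplanes not involving $z_{n+1}$ to themselves and the others to $0$. *)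

(* Defs.v *)
From mathcomp Require Import all_boot all_order all_algebra all_fingroup.
Set Implicit Arguments. Unset Strict Implicit. Unset Printing Implicit Defensive.
Import GRing.Theory.
Local Open Scope ring_scope.

(* ---- Exponents of d-th roots of unity: k : 'I_d stands for zeta^k,
   zeta = exp(2 pi i / d); arithmetic modulo d. ---- *)
Definition rexp_pos (d : nat) (x : 'I_d) : (0 < d)%N :=
  leq_ltn_trans (leq0n x) (ltn_ord x).
Definition rexp_add (d : nat) (x y : 'I_d) : 'I_d :=
  Ordinal (ltn_pmod (x + y)%N (rexp_pos x)).
Definition rexp_sub (d : nat) (x y : 'I_d) : 'I_d :=
  Ordinal (ltn_pmod (x + (d - y))%N (rexp_pos x)).
Definition rexp_opp (d : nat) (x : 'I_d) : 'I_d :=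
  Ordinal (ltn_pmod (d - x)%N (rexp_pos x)).

(* (i, j, k) with i < j : the hyperplane z_i = zeta^k z_j *)
Definition pair_hyp (n d : nat) := {p : 'I_n * 'I_n * 'I_d | (p.1.1 < p.1.2)%N}.
(* i (only when d > 1) : the coordinate hyperplane z_i = 0 *)
Definition coord_hyp (n d : nat) := {i : 'I_n | (1 < d)%N}.
Definition hyp (n d : nat) := (pair_hyp n d + coord_hyp n d)%type.

(* the hyperplane z_i = zeta^k z_j for i <> j, normalised to i < j;
   the default h is only returned when i = j (never used below) *)
Definition mkH (n d : nat) (h : hyp n d) (i j : 'I_n) (k : 'I_d) : hyp n d :=
  match (insub (i, j, k) : option (pair_hyp n d)) with
  | Some p => inl p
  | None =>
    match (insub (j, i, rexp_opp k) : option (pair_hyp n d)) with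
    | Some p => inl p
    | None => h
    end
  end.

(* The element of G(d,1,n) given by s : 'S_n, a : 'I_n -> 'I_d is the
   monomial matrix M with M e_j = zeta^(a j) e_(s j), i.e.
   (M z)_(s j) = zeta^(a j) z_j.  hyp_act s a H = M(H). *)
Definition hyp_act (n d : nat) (s : 'S_n) (a : 'I_n -> 'I_d) (h : hyp n d)
  : hyp n d :=
  match h with
  | inl p => let: (i, j, k) := sval p in
             mkH h (s i) (s j) (rexp_sub (rexp_add k (a i)) (a j))
  | inr c => inr (exist _ (s (sval c)) (svalP c))
  end.

Definition hyp_incl (n d : nat) (h : hyp n d) : hyp n.+1 d :=
  match h with
  | inl p => inl (exist (fun q : 'I_n.+1 * 'I_n.+1 * 'I_d => (q.1.1 < q.1.2)%N)
                  (widen_ord (leqnSn n) (sval p).1.1,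
                   widen_ord (leqnSn n) (sval p).1.2, (sval p).2) (svalP p))
  | inr c => inr (exist _ (widen_ord (leqnSn n) (sval c)) (svalP c))
  end.

(* ---- Degree-r part of the exterior algebra Lambda(Q A) ----
   An element  sum_{t} c(t)/r! * e_(t 0) /\ ... /\ e_(t (r-1))  is represented
   by its alternating coefficient function c on r-tuples of hyperplanes. *)
Definition ext_coef (n d r : nat) := ('I_r -> hyp n d) -> rat.

Definition alternating (n d r : nat) (c : ext_coef n d r) : Prop :=
  (forall t : 'I_r -> hyp n d, ~ injective t -> c t = 0) /\
  (forall (t : 'I_r -> hyp n d) (σ : 'S_r),
      c (t \o σ) = (-1) ^+ odd_perm σ * c t).

(* G(d,1,n)-invariance (G acts on d log forms by permuting hyperplanes) *)
Definition ginvariant (n d r : nat) (c : ext_coef n d r) : Prop :=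
  forall (s : 'S_n) (a : 'I_n -> 'I_d) (t : 'I_r -> hyp n d),
    c (hyp_act s a \o t) = c t.

(* element of Lambda^r(Q A)^{G(d,1,n)} = H^r(Gamma(d,1,n); Q) *)
Definition inv_ext (n d r : nat) (c : ext_coef n d r) : Prop :=
  alternating c /\ ginvariant c.

(* the natural map Lambda^r(Q A(n+1)) -> Lambda^r(Q A(n)):
   e_H |-> e_H if H does not involve z_(n+1), e_H |-> 0 otherwise *)
Definition restrict (n d r : nat) (c : ext_coef n.+1 d r) : ext_coef n d r :=
  fun t => c (hyp_incl (d:=d) \o t).

(* Main.v *)
Require Import Defs.
From mathcomp Require Import all_boot all_order all_algebra all_fingroup.
From Stdlib Require Import ClassicalEpsilon FunctionalExtensionality.
Set Implicit Arguments. Unset Strict Implicit. Unset Printing Implicit Defensive.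
Import GRing.Theory.
Local Open Scope ring_scope.

Section S.
Variables (n d : nat).

Lemma rexp_addE (x y : 'I_d.+1) : rexp_add x y = x + y.
Proof. by apply: val_inj. Qed.
Lemma rexp_oppE (x : 'I_d.+1) : rexp_opp x = - x.
Proof. by apply: val_inj. Qed.
Lemma rexp_subE (x y : 'I_d.+1) : rexp_sub x y = x - y.
Proof. apply: val_inj => /=. by rewrite modnDmr. Qed.

Lemma mkH_lt (h : hyp n d.+1) (i j : 'I_n) k (H : (i < j)%N) :
  mkH h i j k = inl (exist _ (i, j, k) H).
Proof. by rewrite /mkH insubT. Qed.

Lemma mkH_gt (h : hyp n d.+1) (i j : 'I_n) k (H : (j < i)%N) :
  mkH h i j k = inl (exist _ (j, i, - k) H).
Proof.
rewrite /mkH insubF /=; last by rewrite ltnNge ltnW.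
by rewrite insubT rexp_oppE.
Qed.

Lemma mkH_def (h h' : hyp n d.+1) (i j : 'I_n) k : i != j ->
  mkH h i j k = mkH h' i j k.
Proof.
rewrite neq_ltn => /orP [H|H]; first by rewrite !(mkH_lt _ _ H).
by rewrite !(mkH_gt _ _ H).
Qed.

Lemma mkH_sym (h h' : hyp n d.+1) (i j : 'I_n) k : i != j ->
  mkH h i j k = mkH h' j i (- k).
Proof.
rewrite neq_ltn => /orP [H|H].
  by rewrite (mkH_lt _ _ H) (mkH_gt _ _ H) opprK.
by rewrite (mkH_lt _ _ H) (mkH_gt _ _ H).
Qed.

Definition coords (h : hyp n d.+1) : seq 'I_n :=
  match h with
  | inl p => [:: (sval p).1.1; (sval p).1.2]
  | inr c => [:: sval c]
  end.

Lemma coords_mkH (h : hyp n d.+1) (i j : 'I_n) k x : i != j ->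
  (x \in coords (mkH h i j k)) = (x == i) || (x == j).
Proof.
rewrite neq_ltn => /orP [H|H].
  by rewrite (mkH_lt _ _ H) /= !inE.
by rewrite (mkH_gt _ _ H) /= !inE orbC.
Qed.

Lemma hact_mkH (s : 'S_n) (a : 'I_n -> 'I_d.+1) (h h' : hyp n d.+1) (i j : 'I_n) k :
  i != j -> hyp_act s a (mkH h i j k) = mkH h' (s i) (s j) (k + a i - a j).
Proof.
have sij : i != j -> s i != s j by rewrite (inj_eq perm_inj).
move=> nij; move: (nij); rewrite neq_ltn => /orP [H|H].
  rewrite (mkH_lt _ _ H) /= rexp_subE rexp_addE; apply: mkH_def; exact: sij.
rewrite (mkH_gt _ _ H) /= rexp_subE rexp_addE (mkH_sym _ h').
  by rewrite !opprD !opprK addrAC addrC addrA.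
by rewrite eq_sym sij.
Qed.

Lemma ltn_neq' (i j : 'I_n) : (i < j)%N -> i != j.
Proof. by move=> H; rewrite neq_ltn H. Qed.

Lemma hact_coords (s : 'S_n) (a : 'I_n -> 'I_d.+1) (h : hyp n d.+1) x :
  (s x \in coords (hyp_act s a h)) = (x \in coords h).
Proof.
case: h => [[[[i j] k] H]|[i H]] /=.
  by rewrite coords_mkH ?(inj_eq perm_inj) ?inE // (ltn_neq' H).
by rewrite !inE (inj_eq perm_inj).
Qed.

Lemma hact_local (s s' : 'S_n) (a a' : 'I_n -> 'I_d.+1) (h : hyp n d.+1) :
  (forall x, x \in coords h -> s x = s' x /\ a x = a' x) ->
  hyp_act s a h = hyp_act s' a' h.
Proof.
case: h => [[[[i j] k] H]|[i H]] /= E.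
  have [-> ->] := E i (mem_head _ _).
  have [-> ->] := E j ltac:(by rewrite !inE eqxx orbT). by [].
have [-> _] := E i (mem_head _ _). by [].
Qed.

Lemma hact1 (h : hyp n d.+1) : hyp_act 1 (fun _ => 0) h = h.
Proof.
case: h => [[[[i j] k] H]|[i H]] /=.
  rewrite !perm1 rexp_subE rexp_addE addr0 subr0 (mkH_lt _ _ H).
  by [].
by congr inr; apply: val_inj => /=; rewrite perm1.
Qed.

Lemma hactM (s s2 : 'S_n) (a a2 : 'I_n -> 'I_d.+1) (h : hyp n d.+1) :
  hyp_act s a (hyp_act s2 a2 h) = hyp_act (s2 * s) (fun j => a2 j + a (s2 j)) h.
Proof.
case: h => [[[[i j] k] H]|[i H]] /=.
  rewrite (hact_mkH _ _ _ (inl (exist _ (i, j, k) H))); last first.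
    by rewrite (inj_eq perm_inj) (ltn_neq' H).
  rewrite !permM !rexp_subE !rexp_addE; congr mkH.
  by rewrite opprD !addrA; congr (_ + _); rewrite addrAC -!addrA; congr (_ + _); rewrite addrC.
by congr inr; apply: val_inj => /=; rewrite permM.
Qed.

Lemma hactV (s : 'S_n) (a : 'I_n -> 'I_d.+1) (h : hyp n d.+1) :
  hyp_act (s^-1)%g (fun j => - a (s^-1%g j)) (hyp_act s a h) = h.
Proof.
rewrite hactM -[RHS]hact1; apply: hact_local => x _.
by rewrite permM permK perm1 subrr.
Qed.
End S.

Section S2.
Variables (n d : nat).
Local Notation W := (widen_ord (leqnSn n)).
Local Notation incl := (@hyp_incl n d.+1).

Definition code m (h : hyp m d.+1) : (nat * nat * nat) + nat :=
  match h with
  | inl p => inl ((sval p).1.1 : nat, (sval p).1.2 : nat, (sval p).2 : nat)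
  | inr c => inr (sval c : nat)
  end.

Lemma code_inj m : injective (@code m).
Proof.
move=> [[[[i j] k] H]|[i H]] [[[[i' j'] k'] H']|[i' H']] //= [].
  move=> /val_inj Ei /val_inj Ej /val_inj Ek; subst.
  by congr inl; apply: val_inj.
by move=> /val_inj Ei; subst; congr inr; apply: val_inj.
Qed.

Lemma code_incl h : code (incl h) = code h.
Proof. by case: h => [[[[i j] k] H]|[i H]]. Qed.

Lemma incl_inj : injective incl.
Proof. by move=> h1 h2 /(congr1 (@code _)); rewrite !code_incl => /code_inj. Qed.

Lemma coords_incl h : coords (incl h) = map W (coords h).
Proof. by case: h => [[[[i j] k] H]|[i H]]. Qed.

Lemma max_notin_incl h : ord_max \notin coords (incl h).
Proof.
rewrite coords_incl; apply/mapP => [[x _ /(congr1 val) /= E]].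
by move: (ltn_ord x); rewrite -E ltnn.
Qed.

Lemma W_coords h x : (W x \in coords (incl h)) = (x \in coords h).
Proof. rewrite coords_incl mem_map //. move=> x1 x2 /(congr1 val) E. exact: val_inj. Qed.

Lemma incl_mkH (h : hyp n d.+1) (h' : hyp n.+1 d.+1) (i j : 'I_n) k : i != j ->
  incl (mkH h i j k) = mkH h' (W i) (W j) k.
Proof.
rewrite neq_ltn => /orP [H|H].
  rewrite (mkH_lt _ _ H) (mkH_lt _ _ (H : (W i < W j)%N)).
  by congr inl; apply: val_inj.
rewrite (mkH_gt _ _ H) (mkH_gt _ _ (H : (W j < W i)%N)).
by congr inl; apply: val_inj.
Qed.

Lemma hact_incl (s' : 'S_n.+1) (a' : 'I_n.+1 -> 'I_d.+1) (s : 'S_n) (a : 'I_n -> 'I_d.+1) h :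
  (forall x, s' (W x) = W (s x)) -> (forall x, a' (W x) = a x) ->
  hyp_act s' a' (incl h) = incl (hyp_act s a h).
Proof.
move=> Es Ea; case: h => [[[[i j] k] H]|[i H]] /=.
  rewrite (incl_mkH _ (inl (exist (fun q : 'I_n.+1 * 'I_n.+1 * 'I_d.+1 => (q.1.1 < q.1.2)%N)
                  (W i, W j, k) H))); last by rewrite (inj_eq perm_inj) ltn_neq'.
  rewrite !Es !Ea; apply: mkH_def; by rewrite -val_eqE /= val_eqE (inj_eq perm_inj) ltn_neq'.
by congr inr; apply: val_inj => /=; rewrite Es.
Qed.

Lemma uncl (h : hyp n.+1 d.+1) : ord_max \notin coords h -> exists h', h = incl h'.
Proof.
case: h => [[[[i j] k] H]|[i H]] /=; rewrite !inE.
  case/norP => ni nj.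
  have hi : (i < n)%N by rewrite ltn_neqAle -ltnS ltn_ord andbT; apply: contra ni => /eqP E; apply/eqP/val_inj.
  have hj : (j < n)%N by rewrite ltn_neqAle -ltnS ltn_ord andbT; apply: contra nj => /eqP E; apply/eqP/val_inj.
  exists (inl (exist (fun q : 'I_n * 'I_n * 'I_d.+1 => (q.1.1 < q.1.2)%N) (Ordinal hi, Ordinal hj, k) H)).
  by congr inl; apply: val_inj => /=; congr (_, _, _); apply: val_inj.
move=> ni.
have hi : (i < n)%N by rewrite ltn_neqAle -ltnS ltn_ord andbT; apply: contra ni => /eqP E; apply/eqP/val_inj.
exists (inr (exist (fun _ => (1 < d.+1)%N) (Ordinal hi) H)).
by congr inr; apply: val_inj => /=; apply: val_inj.
Qed.
End S2.

Lemma size_coords m d (h : hyp m d.+1) : (size (coords h) <= 2)%N.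
Proof. by case: h => [[[[i j] k] H]|[i H]]. Qed.

Lemma free_coord m d r (t : 'I_r -> hyp m d.+1) : (2 * r < m)%N ->
  exists x, forall i, x \notin coords (t i).
Proof.
move=> Hr.
set cs := flatten [seq coords (t i) | i <- enum 'I_r].
have Hs : forall l : seq 'I_r, (size (flatten [seq coords (t i) | i <- l]) <= 2 * size l)%N.
  elim=> [|i l IH] //=; rewrite size_cat mulnS leq_add //; exact: size_coords.
have [x Hx|] := pickP (fun x => x \notin cs).
  exists x => i; apply: contra Hx => Hi; apply/flattenP.
  by exists (coords (t i)) => //; apply: map_f; rewrite mem_enum.
move=> Hall; exfalso.
have : (size (enum 'I_m) <= size cs)%N.
  by apply: uniq_leq_size; [exact: enum_uniq | move=> x _; move: (Hall x) => /= /negbFE].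
rewrite size_enum_ord => H; move: (leq_trans H (Hs _)); rewrite size_enum_ord.
by rewrite leqNgt Hr.
Qed.

Lemma part3 n d r (c1 c2 : ext_coef n.+1 d.+1 r) : (2 * r <= n)%N ->
  inv_ext c1 -> inv_ext c2 ->
  (forall t, restrict c1 t = restrict c2 t) -> forall t, c1 t = c2 t.
Proof.
move=> Hr [_ I1] [_ I2] E t.
have [m Hm] := free_coord t (Hr : (2 * r < n.+1)%N).
pose tau := tperm m ord_max.
have : forall i, exists h', hyp_act tau (fun _ => 0) (t i) = hyp_incl h'.
  move=> i; apply: uncl; rewrite -(tpermL m ord_max) hact_coords; exact: Hm.
case/fin_all_exists => t' Ht'.
have Et : hyp_act tau (fun _ => 0) \o t = hyp_incl (d:=d.+1) \o t'.
  by apply: functional_extensionality => i /=; rewrite Ht'.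
rewrite -(I1 tau (fun _ => 0) t) -(I2 tau (fun _ => 0) t) Et.
exact: E.
Qed.

Lemma W_lift n (x : 'I_n) : widen_ord (leqnSn n) x = lift ord_max x.
Proof. by apply: val_inj; rewrite /= /bump leqNgt ltn_ord. Qed.

Definition ext_a n d (a : 'I_n -> 'I_d.+1) (x : 'I_n.+1) : 'I_d.+1 :=
  match (insub (val x) : option 'I_n) with Some y => a y | None => 0 end.

Lemma ext_aW n d (a : 'I_n -> 'I_d.+1) x : ext_a a (widen_ord (leqnSn n) x) = a x.
Proof. by rewrite /ext_a /= valK. Qed.

Lemma part1 n d r (c : ext_coef n.+1 d.+1 r) : inv_ext c -> inv_ext (restrict c).
Proof.
move=> [[A1 A2] I]; split; first split.
- move=> t Nt; apply: A1 => Hi; apply: Nt => x y Exy; apply: Hi; by rewrite /= Exy.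
- move=> t sg; exact: (A2 (hyp_incl (d:=d.+1) \o t) sg).
- move=> s a t; rewrite /restrict.
  have -> : hyp_incl (d:=d.+1) \o (hyp_act s a \o t) =
            hyp_act (lift_perm ord_max ord_max s) (ext_a a) \o (hyp_incl (d:=d.+1) \o t).
    apply: functional_extensionality => i /=; symmetry; apply: hact_incl.
      by move=> x; rewrite !W_lift lift_perm_lift.
    exact: ext_aW.
  exact: I.
Qed.

Lemma keyW n d r (c' : ext_coef n d.+1 r) : ginvariant c' ->
  forall (s : 'S_n.+1) a (t1 t2 : 'I_r -> hyp n d.+1),
  (forall i, hyp_act s a (hyp_incl (t1 i)) = hyp_incl (t2 i)) -> c' t1 = c' t2.
Proof.
move=> I s a t1 t2 E.
pose m := (s^-1)%g ord_max.
pose s2 := (tperm m ord_max * s)%g.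
have s2max : s2 ord_max = ord_max by rewrite permM tpermR permKV.
have s2lt : forall x : 'I_n, (s2 (widen_ord (leqnSn n) x) < n)%N.
  move=> x; rewrite ltn_neqAle -ltnS ltn_ord andbT.
  apply/eqP => Ex.
  have : s2 (widen_ord (leqnSn n) x) = s2 ord_max by rewrite s2max; apply: val_inj.
  move/perm_inj/(congr1 val) => /= Ex'.
  by move: (ltn_ord x); rewrite Ex' ltnn.
pose f (x : 'I_n) : 'I_n := insubd x (val (s2 (widen_ord (leqnSn n) x))).
have fE : forall x, val (f x) = val (s2 (widen_ord (leqnSn n) x)).
  by move=> x; rewrite val_insubd s2lt.
have f_inj : injective f.
  move=> x y /(congr1 val); rewrite !fE => /val_inj /perm_inj /(congr1 val) /= Exy.
  exact: val_inj.
pose s' := perm f_inj.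
have Es' : forall x, s2 (widen_ord (leqnSn n) x) = widen_ord (leqnSn n) (s' x).
  move=> x; apply: val_inj; by rewrite [RHS]/= (permE f_inj) fE.
have E2 : forall i, hyp_incl (hyp_act s' (fun x => a (widen_ord (leqnSn n) x)) (t1 i)) = hyp_incl (t2 i).
  move=> i; rewrite -(hact_incl (s' := s2) (a' := a)) //; rewrite -E.
  apply: hact_local => x Hx; split => //.
  rewrite permM tpermD //.
    apply/eqP => Em; have := max_notin_incl (t2 i).
    rewrite -E -(permKV s ord_max) -/m Em hact_coords Hx //.
  apply/eqP => Em; have := max_notin_incl (t1 i).
  by rewrite Em Hx.
have -> : t2 = hyp_act s' (fun x => a (widen_ord (leqnSn n) x)) \o t1.
  apply: functional_extensionality => i /=; apply: incl_inj; by rewrite E2.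
by rewrite I.
Qed.

Definition Prel n d r (t : 'I_r -> hyp n.+1 d.+1) (t' : 'I_r -> hyp n d.+1) :=
  exists (s : 'S_n.+1) a, forall i, hyp_act s a (t i) = hyp_incl (t' i).

Definition extc n d r (c' : ext_coef n d.+1 r) : ext_coef n.+1 d.+1 r := fun t =>
  match excluded_middle_informative (exists t', Prel t t') with
  | left H => c' (proj1_sig (constructive_indefinite_description _ H))
  | right _ => 0
  end.

Lemma Prel_uniq n d r (c' : ext_coef n d.+1 r) : ginvariant c' ->
  forall t t1 t2, Prel t t1 -> Prel t t2 -> c' t1 = c' t2.
Proof.
move=> I t t1 t2 [s1 [a1 E1]] [s2 [a2 E2]].
apply: (keyW I (s := ((s1^-1)%g * s2)%g) (a := fun j => - a1 ((s1^-1)%g j) + a2 ((s1^-1)%g j))).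
move=> i; etransitivity; first exact: (esym (hactM s2 (s1^-1)%g a2 (fun j => - a1 ((s1^-1)%g j)) _)).
by rewrite -E1 hactV; exact: E2.
Qed.

Lemma extc_spec n d r (c' : ext_coef n d.+1 r) : ginvariant c' ->
  forall t t1, Prel t t1 -> extc c' t = c' t1.
Proof.
move=> I t t1 P; rewrite /extc.
case: excluded_middle_informative => [H|H]; last by case: H; exists t1.
case: constructive_indefinite_description => t0 P0 /=.
exact: (Prel_uniq I P0 P).
Qed.

Lemma extc_none n d r (c' : ext_coef n d.+1 r) t :
  ~ (exists t', Prel t t') -> extc c' t = 0.
Proof. by move=> H; rewrite /extc; case: excluded_middle_informative. Qed.

Lemma part2 n d r (c' : ext_coef n d.+1 r) : inv_ext c' ->
  inv_ext (extc c') /\ forall t, restrict (extc c') t = c' t.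
Proof.
move=> [[A1 A2] I]; split; first split; first split.
- move=> t Nt; case: (classic (exists t', Prel t t')) => [[t1 P]|H]; last exact: extc_none.
  rewrite (extc_spec I P); apply: A1 => Inj; apply: Nt => x y Exy.
  case: P => s [a E]; apply: Inj; apply: incl_inj; by rewrite -!E Exy.
- move=> t sg; case: (classic (exists t', Prel t t')) => [[t1 P]|H].
    rewrite (extc_spec I P) -A2; apply: extc_spec => //.
    by case: P => s [a E]; exists s, a => i /=; rewrite E.
  rewrite (extc_none _ H) mulr0; apply: extc_none => -[t2 [s [a E]]]; apply: H.
  exists (t2 \o (sg^-1)%g), s, a => i /=; by rewrite -E /= permKV.
- move=> s a t; case: (classic (exists t', Prel t t')) => [[t1 P]|H].
    rewrite (extc_spec I P); apply: extc_spec => //.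
    case: P => s1 [a1 E]; exists ((s^-1)%g * s1)%g, (fun j => - a ((s^-1)%g j) + a1 ((s^-1)%g j)).
    move=> i; etransitivity; first exact: (esym (hactM s1 (s^-1)%g a1 (fun j => - a ((s^-1)%g j)) _)).
    by rewrite /= hactV E.
  rewrite (extc_none _ H); apply: extc_none => -[t2 [s2 [a2 E]]]; apply: H.
  exists t2, (s * s2)%g, (fun j => a j + a2 (s j)) => i.
  etransitivity; first exact: (esym (hactM s2 s a2 a _)).
  exact: E.
- move=> t; rewrite /restrict; apply: extc_spec => //.
  by exists 1%g, (fun _ => 0) => i; rewrite hact1.
Qed.

(* H^r(Gamma(d,1,n);Q) = Lambda^r(Q A)^{G(d,1,n)}, modelled by [inv_ext];
   the natural map H^r(Gamma(d,1,n+1)) -> H^r(Gamma(d,1,n)) is [restrict]. *)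
Theorem proposition3p21 (d r : nat) : (1 <= d)%N ->
  forall n : nat, (1 <= n)%N ->
    (* the natural map is well defined on invariants *)
    (forall c : ext_coef n.+1 d r, inv_ext c -> inv_ext (restrict c)) /\
    (* surjective *)
    (forall c' : ext_coef n d r, inv_ext c' ->
       exists c : ext_coef n.+1 d r,
         inv_ext c /\ forall t, restrict c t = c' t) /\
    (* injective (hence an isomorphism) for n >= 2r *)
    ((2 * r <= n)%N ->
     forall c1 c2 : ext_coef n.+1 d r, inv_ext c1 -> inv_ext c2 ->
       (forall t, restrict c1 t = restrict c2 t) -> forall t, c1 t = c2 t).
Proof.
case: d => [//|d] _ n _.
split; first exact: part1.
split; first by move=> c' Hc'; exists (extc c'); exact: part2.
move=> Hr c1 c2; exact: part3.
Qed.
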